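(* For all (not necessarily typable) terms $M,N_1,N_2$ of $\lambda^{\triangleright}$: if $M\to^*N_1$ and $M\to^*N_2$, then there exists $N$ such that $N_1\to^*N$ and $N_2\to^*N$.
   Context: Terms of $\lambda^{\triangleright}$: transition variables $\alpha,\beta,\dots$; a transition $A,B$ is a finite sequence of transition variables ($\varepsilon$ empty, $AB$ concatenation). Types $\tau ::= b \mid \tau\to\tau \mid \triangleright_\alpha\tau \mid \forall\alpha.\tau$. Terms $M ::= x \mid M\,M \mid \lambda x{:}\tau.M \mid \blacktriangleright_\alpha M \mid \blacktriangleleft_\alpha M \mid \Lambda\alpha.M \mid M\,A$ (quotation, unquotation, transition abstraction, instantiation by a transition); $x$ is bound in $\lambda x{:}\tau.M$ and $\alpha$ in $\Lambda\alpha.M$. For $A=\alpha_1\cdots\alpha_n$: $\blacktriangleright_A M=\blacktriangleright_{\alpha_1}\cdots\blacktriangleright_{\alpha_n}M$, $\blacktriangleleft_A M=\blacktriangleleft_{\alpha_n}\cdots\blacktriangleleft_{\alpha_1}M$ (identity when $A=\varepsilon$), and similarly $\triangleright_A\tau$. $M[x:=N]$ is capture-avoiding term substitution; $M[\alpha:=B]$ is capture-avoiding substitution of a transition $B$ for $\alpha$, replacing $\alpha$ by $B$ in transitions and $\triangleright_\alpha,\blacktriangleright_\alpha,\blacktriangleleft_\alpha$ by $\triangleright_B,\blacktriangleright_B,\blacktriangleleft_B$. Reduction $M\to N$ is the least relation closed under all term constructors (reduction anywhere, including under binders and quotations) containing $(\lambda x{:}\tau.M)\,N\to M[x:=N]$,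 $\blacktriangleleft_\alpha\blacktriangleright_\alpha M\to M$, $(\Lambda\alpha.M)\,A\to M[\alpha:=A]$; $\to^*$ is its reflexive-transitive closure. *)

(* Defs.v *)
(* Raw (untyped) terms of lambda^triangleright, in de Bruijn
   form: term variables and transition variables are two separate de Bruijn
   namespaces (this makes substitution capture-avoiding by construction). *)
From Stdlib Require Import List Relations.
Import ListNotations.

(* transition variables are de Bruijn indices; a transition is a finite
   sequence of transition variables ([] = epsilon, ++ = concatenation) *)
Definition tvar := nat.
Definition transition := list tvar.

Inductive ty : Type :=
| TBase : nat -> ty
| TArr : ty -> ty -> ty
| TLater : tvar -> ty -> ty
| TAll : ty -> ty.                  (* forall alpha. tau  (binds index 0) *)

Inductive tm : Type :=
| Var : nat -> tm
| App : tm -> tm -> tm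
| Lam : ty -> tm -> tm
| Quo : tvar -> tm -> tm
| Unq : tvar -> tm -> tm
| TLam : tm -> tm                   (* Lambda alpha. M (binds transition index 0) *)
| TApp : tm -> transition -> tm.

Definition tsub := tvar -> transition.

Definition up_tsub (s : tsub) : tsub :=
  fun n => match n with 0 => [0] | S m => map S (s m) end.

Definition subst_trans (s : tsub) (A : transition) : transition :=
  flat_map s A.

Definition later_seq (A : transition) (t : ty) : ty :=
  fold_right TLater t A.
Definition quo_seq (A : transition) (M : tm) : tm :=
  fold_right Quo M A.
(* <<|_A M = <<|_an ... <<|_a1 M *)
Definition unq_seq (A : transition) (M : tm) : tm :=
  fold_left (fun N a => Unq a N) A M.

Fixpoint ty_tsubst (s : tsub) (t : ty) : ty :=
  match t with
  | TBase b => TBase b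
  | TArr t1 t2 => TArr (ty_tsubst s t1) (ty_tsubst s t2)
  | TLater a t1 => later_seq (s a) (ty_tsubst s t1)
  | TAll t1 => TAll (ty_tsubst (up_tsub s) t1)
  end.

Fixpoint tm_tsubst (s : tsub) (M : tm) : tm :=
  match M with
  | Var x => Var x
  | App M1 M2 => App (tm_tsubst s M1) (tm_tsubst s M2)
  | Lam t M1 => Lam (ty_tsubst s t) (tm_tsubst s M1)
  | Quo a M1 => quo_seq (s a) (tm_tsubst s M1)
  | Unq a M1 => unq_seq (s a) (tm_tsubst s M1)
  | TLam M1 => TLam (tm_tsubst (up_tsub s) M1)
  | TApp M1 A => TApp (tm_tsubst s M1) (subst_trans s A)
  end.

Definition tshift : tsub := fun n => [S n].

Fixpoint tm_ren (r : nat -> nat) (M : tm) : tm :=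
  match M with
  | Var x => Var (r x)
  | App M1 M2 => App (tm_ren r M1) (tm_ren r M2)
  | Lam t M1 => Lam t (tm_ren (fun n => match n with 0 => 0 | S m => S (r m) end) M1)
  | Quo a M1 => Quo a (tm_ren r M1)
  | Unq a M1 => Unq a (tm_ren r M1)
  | TLam M1 => TLam (tm_ren r M1)
  | TApp M1 A => TApp (tm_ren r M1) A
  end.

Definition up_sub (s : nat -> tm) : nat -> tm :=
  fun n => match n with 0 => Var 0 | S m => tm_ren S (s m) end.

Fixpoint tm_subst (s : nat -> tm) (M : tm) : tm :=
  match M with
  | Var x => s x
  | App M1 M2 => App (tm_subst s M1) (tm_subst s M2)
  | Lam t M1 => Lam t (tm_subst (up_sub s) M1)
  | Quo a M1 => Quo a (tm_subst s M1)
  | Unq a M1 => Unq a (tm_subst s M1)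
  | TLam M1 => TLam (tm_subst (fun n => tm_tsubst tshift (s n)) M1)
  | TApp M1 A => TApp (tm_subst s M1) A
  end.

Definition subst1 (M N : tm) : tm :=
  tm_subst (fun n => match n with 0 => N | S m => Var m end) M.

Definition tsubst1 (M : tm) (A : transition) : tm :=
  tm_tsubst (fun n => match n with 0 => A | S m => [m] end) M.

Inductive step : tm -> tm -> Prop :=
| step_beta : forall t M N, step (App (Lam t M) N) (subst1 M N)
| step_quo : forall a M, step (Unq a (Quo a M)) M
| step_tbeta : forall M A, step (TApp (TLam M) A) (tsubst1 M A)
| step_appl : forall M M' N, step M M' -> step (App M N) (App M' N)
| step_appr : forall M N N', step N N' -> step (App M N) (App M N')
| step_lam : forall t M M', step M M' -> step (Lam t M) (Lam t M')
| step_Quo : forall a M M', step M M' -> step (Quo a M) (Quo a M')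
| step_Unq : forall a M M', step M M' -> step (Unq a M) (Unq a M')
| step_tlam : forall M M', step M M' -> step (TLam M) (TLam M')
| step_tapp : forall M M' A, step M M' -> step (TApp M A) (TApp M' A).

Definition steps : tm -> tm -> Prop := clos_refl_trans tm step.

(* Main.v *)
Require Import Defs.
From Stdlib Require Import List Relations.
From Stdlib Require Import FunctionalExtensionality.
Import ListNotations.

Lemma quo_seq_app A B X : quo_seq (A++B) X = quo_seq A (quo_seq B X).
Proof. unfold quo_seq. apply fold_right_app. Qed.
Lemma later_seq_app A B X : later_seq (A++B) X = later_seq A (later_seq B X).
Proof. unfold later_seq. apply fold_right_app. Qed.
Lemma unq_seq_app A B X : unq_seq (A++B) X = unq_seq B (unq_seq A X).
Proof. unfold unq_seq. apply fold_left_app. Qed.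
Lemma unq_seq_cons a A X : unq_seq (a::A) X = unq_seq A (Unq a X).
Proof. reflexivity. Qed.

Lemma flat_map_map' {A B C} (f : B -> list C) (g : A -> B) l :
  flat_map f (map g l) = flat_map (fun x => f (g x)) l.
Proof. induction l; simpl; congruence. Qed.
Lemma map_flat_map' {A B C} (f : A -> list B) (g : B -> C) l :
  map g (flat_map f l) = flat_map (fun x => map g (f x)) l.
Proof. induction l; simpl; auto. rewrite map_app; congruence. Qed.
Lemma flat_map_app' {A B} (f : A -> list B) l1 l2 :
  flat_map f (l1 ++ l2) = flat_map f l1 ++ flat_map f l2.
Proof. induction l1; simpl; auto. rewrite IHl1, app_assoc; auto. Qed.
Lemma flat_map_sing {A B} (f : A -> list B) (g : A -> B) l :
  (forall x, f x = [g x]) -> flat_map f l = map g l.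
Proof. intros H; induction l; simpl; auto. rewrite H, IHl; auto. Qed.

Definition tcomp (t s : tsub) : tsub := fun n => subst_trans s (t n).

Lemma up_tcomp t s : up_tsub (tcomp t s) = tcomp (up_tsub t) (up_tsub s).
Proof.
  apply functional_extensionality; intros [|m]; unfold tcomp, subst_trans; simpl.
  - reflexivity.
  - rewrite flat_map_map', map_flat_map'. reflexivity.
Qed.

Lemma ty_later_seq s A T :
  ty_tsubst s (later_seq A T) = later_seq (subst_trans s A) (ty_tsubst s T).
Proof.
  induction A; simpl; auto. unfold subst_trans in *; simpl.
  rewrite IHA, later_seq_app; auto.
Qed.

Lemma ty_tsubst_comp T : forall t s,
  ty_tsubst s (ty_tsubst t T) = ty_tsubst (tcomp t s) T.
Proof.
  induction T; intros; simpl; auto.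
  - rewrite IHT1, IHT2; auto.
  - rewrite ty_later_seq, IHT; auto.
  - rewrite IHT, up_tcomp; auto.
Qed.

Lemma ty_tsubst_id T : forall s, (forall n, s n = [n]) -> ty_tsubst s T = T.
Proof.
  induction T; intros s Hs; simpl; auto.
  - rewrite IHT1, IHT2; auto.
  - rewrite Hs, IHT; auto.
  - rewrite IHT; auto. intros [|m]; simpl; auto. rewrite Hs; auto.
Qed.

Lemma tm_quo_seq s A X :
  tm_tsubst s (quo_seq A X) = quo_seq (subst_trans s A) (tm_tsubst s X).
Proof.
  induction A; simpl; auto. unfold subst_trans in *; simpl.
  rewrite IHA, quo_seq_app; auto.
Qed.

Lemma tm_unq_seq s A : forall X,
  tm_tsubst s (unq_seq A X) = unq_seq (subst_trans s A) (tm_tsubst s X).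
Proof.
  induction A; intros; [reflexivity|]. rewrite unq_seq_cons, IHA.
  unfold subst_trans; cbn [flat_map]. rewrite unq_seq_app. reflexivity.
Qed.

Lemma tm_tsubst_comp M : forall t s,
  tm_tsubst s (tm_tsubst t M) = tm_tsubst (tcomp t s) M.
Proof.
  induction M; intros; simpl; auto.
  - rewrite IHM1, IHM2; auto.
  - rewrite ty_tsubst_comp, IHM; auto.
  - rewrite tm_quo_seq, IHM; auto.
  - rewrite tm_unq_seq, IHM; auto.
  - rewrite IHM, up_tcomp; auto.
  - rewrite IHM. f_equal. unfold subst_trans, tcomp.
    induction t; simpl; auto. rewrite flat_map_app', IHt; auto.
Qed.

Lemma tm_tsubst_id M : forall s, (forall n, s n = [n]) -> tm_tsubst s M = M.
Proof.
  induction M; intros s Hs; simpl; auto.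
  - rewrite IHM1, IHM2; auto.
  - rewrite ty_tsubst_id, IHM; auto.
  - rewrite Hs, IHM; auto.
  - rewrite Hs, IHM; auto.
  - rewrite IHM; auto. intros [|m]; simpl; auto. rewrite Hs; auto.
  - rewrite IHM; auto. f_equal. unfold subst_trans.
    rewrite (flat_map_sing _ (fun x => x)); auto. apply map_id.
Qed.

Lemma ren_quo_seq r A X : tm_ren r (quo_seq A X) = quo_seq A (tm_ren r X).
Proof. induction A; simpl; congruence. Qed.
Lemma ren_unq_seq r A : forall X, tm_ren r (unq_seq A X) = unq_seq A (tm_ren r X).
Proof. induction A; intros; [reflexivity|]. rewrite !unq_seq_cons, IHA; simpl; auto. Qed.
Lemma subst_quo_seq r A X : tm_subst r (quo_seq A X) = quo_seq A (tm_subst r X).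
Proof. induction A; simpl; congruence. Qed.
Lemma subst_unq_seq r A : forall X, tm_subst r (unq_seq A X) = unq_seq A (tm_subst r X).
Proof. induction A; intros; [reflexivity|]. rewrite !unq_seq_cons, IHA; simpl; auto. Qed.

Lemma ren_tsubst M : forall r s, tm_ren r (tm_tsubst s M) = tm_tsubst s (tm_ren r M).
Proof.
  induction M; intros; simpl; auto; try (rewrite ?IHM, ?IHM1, ?IHM2; auto).
  - rewrite ren_quo_seq, IHM; auto.
  - rewrite ren_unq_seq, IHM; auto.
Qed.

Lemma ren_ren M : forall r r', tm_ren r (tm_ren r' M) = tm_ren (fun n => r (r' n)) M.
Proof.
  induction M; intros; simpl; auto; try (rewrite ?IHM, ?IHM1, ?IHM2; auto).
  f_equal; f_equal. apply functional_extensionality; intros [|m]; auto.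
Qed.

Lemma subst_ren M : forall s r, tm_subst s (tm_ren r M) = tm_subst (fun n => s (r n)) M.
Proof.
  induction M; intros; simpl; auto; try (rewrite ?IHM, ?IHM1, ?IHM2; auto).
  f_equal; f_equal. apply functional_extensionality; intros [|m]; auto.
Qed.

Lemma ren_subst M : forall r s, tm_ren r (tm_subst s M) = tm_subst (fun n => tm_ren r (s n)) M.
Proof.
  induction M; intros; simpl; auto; try (rewrite ?IHM, ?IHM1, ?IHM2; auto).
  - f_equal; f_equal. apply functional_extensionality; intros [|m]; simpl; auto.
    rewrite !ren_ren. reflexivity.
  - f_equal; f_equal. apply functional_extensionality; intros n.
    apply ren_tsubst.
Qed.

Lemma tsubst_subst M : forall t s,
  tm_tsubst t (tm_subst s M) = tm_subst (fun n => tm_tsubst t (s n)) (tm_tsubst t M).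
Proof.
  induction M; intros; simpl; auto; try (rewrite ?IHM, ?IHM1, ?IHM2; auto).
  - f_equal; f_equal. apply functional_extensionality; intros [|m]; simpl; auto.
    symmetry; apply ren_tsubst.
  - rewrite subst_quo_seq; auto.
  - rewrite subst_unq_seq; auto.
  - f_equal; f_equal. apply functional_extensionality; intros n.
    rewrite !tm_tsubst_comp. f_equal. apply functional_extensionality; intros k.
    unfold tcomp, subst_trans, tshift; simpl. rewrite app_nil_r.
    rewrite (flat_map_sing _ S); auto.
Qed.

Lemma subst_subst M : forall s t,
  tm_subst s (tm_subst t M) = tm_subst (fun n => tm_subst s (t n)) M.
Proof.
  induction M; intros; simpl; auto; try (rewrite ?IHM, ?IHM1, ?IHM2; auto).
  - f_equal; f_equal. apply functional_extensionality; intros [|m]; simpl; auto.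
    rewrite subst_ren, ren_subst. reflexivity.
  - f_equal; f_equal. apply functional_extensionality; intros n.
    rewrite tsubst_subst. reflexivity.
Qed.

Lemma subst_id M : forall s, (forall n, s n = Var n) -> tm_subst s M = M.
Proof.
  induction M; intros s Hs; simpl; auto; try (rewrite ?IHM, ?IHM1, ?IHM2; auto).
  - intros [|m]; simpl; auto. rewrite Hs; auto.
  - intros n; rewrite Hs; auto.
Qed.

Lemma tsubst_subst1 t M N :
  tm_tsubst t (subst1 M N) = subst1 (tm_tsubst t M) (tm_tsubst t N).
Proof.
  unfold subst1; rewrite tsubst_subst. f_equal.
  apply functional_extensionality; intros [|m]; reflexivity.
Qed.

Lemma tsubst_tsubst1 s M A :
  tm_tsubst s (tsubst1 M A) = tsubst1 (tm_tsubst (up_tsub s) M) (subst_trans s A).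
Proof.
  unfold tsubst1; rewrite !tm_tsubst_comp. f_equal.
  apply functional_extensionality; intros [|m]; unfold tcomp, subst_trans; simpl.
  - rewrite app_nil_r; auto.
  - rewrite app_nil_r, flat_map_map'. rewrite (flat_map_sing _ (fun x => x)); auto.
    symmetry; apply map_id.
Qed.

Lemma subst_tsubst1 s M A :
  tm_subst s (tsubst1 M A) = tsubst1 (tm_subst (fun n => tm_tsubst tshift (s n)) M) A.
Proof.
  unfold tsubst1; rewrite tsubst_subst. f_equal.
  apply functional_extensionality; intros n.
  rewrite tm_tsubst_comp, tm_tsubst_id; auto.
Qed.

Lemma subst_subst1 s M N :
  tm_subst s (subst1 M N) = subst1 (tm_subst (up_sub s) M) (tm_subst s N).
Proof.
  unfold subst1; rewrite !subst_subst. f_equal.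
  apply functional_extensionality; intros [|m]; simpl; auto.
  rewrite subst_ren, subst_id; auto.
Qed.

Lemma ren_subst1 r M N :
  tm_ren r (subst1 M N) =
  subst1 (tm_ren (fun n => match n with 0 => 0 | S m => S (r m) end) M) (tm_ren r N).
Proof.
  unfold subst1; rewrite ren_subst, subst_ren. f_equal.
  apply functional_extensionality; intros [|m]; reflexivity.
Qed.

Lemma ren_tsubst1 r M A : tm_ren r (tsubst1 M A) = tsubst1 (tm_ren r M) A.
Proof. apply ren_tsubst. Qed.

Inductive par : tm -> tm -> Prop :=
| par_var x : par (Var x) (Var x)
| par_app M M' N N' : par M M' -> par N N' -> par (App M N) (App M' N')
| par_lam t M M' : par M M' -> par (Lam t M) (Lam t M')
| par_Quo a M M' : par M M' -> par (Quo a M) (Quo a M')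
| par_Unq a M M' : par M M' -> par (Unq a M) (Unq a M')
| par_tlam M M' : par M M' -> par (TLam M) (TLam M')
| par_tapp M M' A : par M M' -> par (TApp M A) (TApp M' A)
| par_beta t M M1 N N1 : par M (Lam t M1) -> par N N1 -> par (App M N) (subst1 M1 N1)
| par_tbeta M M1 A : par M (TLam M1) -> par (TApp M A) (tsubst1 M1 A)
| par_uq a M N : par M (Quo a N) -> par (Unq a M) N.

Lemma par_refl M : par M M.
Proof. induction M; constructor; auto. Qed.

Lemma par_quo_seq A X Y : par X Y -> par (quo_seq A X) (quo_seq A Y).
Proof. induction A; simpl; auto. constructor; auto. Qed.
Lemma par_unq_seq A : forall X Y, par X Y -> par (unq_seq A X) (unq_seq A Y).
Proof. induction A; [simpl; auto|]. intros. rewrite !unq_seq_cons. apply IHA. constructor; auto. Qed.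
Lemma par_unq_quo_seq A : forall X Y, par X (quo_seq A Y) -> par (unq_seq A X) Y.
Proof.
  induction A; [simpl; auto|]. intros. rewrite unq_seq_cons. apply IHA.
  apply par_uq; auto.
Qed.

Lemma par_ren M M' : par M M' -> forall r, par (tm_ren r M) (tm_ren r M').
Proof.
  induction 1; intros r; simpl in *; try (constructor; auto; fail).
  - rewrite ren_subst1. eapply par_beta; [apply IHpar1 | apply IHpar2].
  - rewrite ren_tsubst1. apply par_tbeta. apply IHpar.
Qed.

Lemma par_tsubst M M' : par M M' -> forall s, par (tm_tsubst s M) (tm_tsubst s M').
Proof.
  induction 1; intros s; simpl in *; try (constructor; auto; fail).
  - apply par_quo_seq; auto.
  - apply par_unq_seq; auto.
  - rewrite tsubst_subst1. eapply par_beta; [apply IHpar1 | apply IHpar2].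
  - rewrite tsubst_tsubst1. apply par_tbeta. apply IHpar.
  - apply par_unq_quo_seq. apply IHpar.
Qed.

Lemma par_subst M M' : par M M' -> forall s s', (forall n, par (s n) (s' n)) ->
  par (tm_subst s M) (tm_subst s' M').
Proof.
  induction 1; intros s s' Hs; simpl in *; try (constructor; auto; fail).
  - apply Hs.
  - constructor; apply IHpar. intros [|m]; simpl; [constructor | apply par_ren; auto].
  - constructor; apply IHpar. intros n; apply par_tsubst; auto.
  - rewrite subst_subst1. eapply par_beta; [apply (IHpar1 s s' Hs) | apply IHpar2; auto].
  - rewrite subst_tsubst1. apply par_tbeta. apply (IHpar s s' Hs).
Qed.

Fixpoint rho (M : tm) : tm :=
  match M with
  | Var x => Var x
  | App M N => match rho M with
               | Lam _ M1 => subst1 M1 (rho N)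
               | M' => App M' (rho N) end
  | Lam t M => Lam t (rho M)
  | Quo a M => Quo a (rho M)
  | Unq a M => match rho M with
               | Quo b N => if Nat.eqb a b then N else Unq a (Quo b N)
               | M' => Unq a M' end
  | TLam M => TLam (rho M)
  | TApp M A => match rho M with
                | TLam M1 => tsubst1 M1 A
                | M' => TApp M' A end
  end.

Lemma triangle M M' : par M M' -> par M' (rho M).
Proof.
  induction 1; simpl; try (constructor; auto; fail).
  - destruct (rho M); try (constructor; auto; fail).
    all: try (eapply par_beta; eauto).
  - destruct (rho M) eqn:E; try (constructor; auto; fail).
    destruct (Nat.eqb a t) eqn:E2; try (constructor; auto; fail).
    apply PeanoNat.Nat.eqb_eq in E2; subst. apply par_uq; auto.
  - destruct (rho M); try (constructor; auto; fail).
    all: try (apply par_tbeta; auto).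
  - destruct (rho M); inversion IHpar1; subst.
    unfold subst1. apply par_subst; auto. intros [|m]; simpl; auto. constructor.
  - destruct (rho M); inversion IHpar; subst. unfold tsubst1. apply par_tsubst; auto.
  - destruct (rho M); inversion IHpar; subst. rewrite PeanoNat.Nat.eqb_refl. auto.
Qed.

Definition pars := clos_refl_trans tm par.

Lemma strip M N1 : par M N1 -> forall N2, pars M N2 ->
  exists N, pars N1 N /\ par N2 N.
Proof.
  intros HH N2 H2. revert N1 HH. induction H2; intros N1 HH.
  - exists (rho x). split; [apply rt_step; apply triangle; auto | apply triangle; auto].
  - exists N1. split; [apply rt_refl | auto].
  - destruct (IHclos_refl_trans1 N1 HH) as [Y [HY1 HY2]].
    destruct (IHclos_refl_trans2 Y HY2) as [Z [HZ1 HZ2]].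
    exists Z. split; auto. eapply rt_trans; eauto.
Qed.

Lemma pars_confl M N1 : pars M N1 -> forall N2, pars M N2 ->
  exists N, pars N1 N /\ pars N2 N.
Proof.
  induction 1; intros N2 H2.
  - destruct (strip _ _ H N2 H2) as [N [A B]]. exists N; split; auto. apply rt_step; auto.
  - exists N2; split; auto. apply rt_refl.
  - destruct (IHclos_refl_trans1 N2 H2) as [Y [HY1 HY2]].
    destruct (IHclos_refl_trans2 Y HY1) as [Z [HZ1 HZ2]].
    exists Z; split; auto. eapply rt_trans; eauto.
Qed.

Lemma steps_cong (f : tm -> tm) : (forall x y, step x y -> step (f x) (f y)) ->
  forall x y, steps x y -> steps (f x) (f y).
Proof.
  intros Hf x y H; induction H.
  - apply rt_step; auto.
  - apply rt_refl.
  - eapply rt_trans; eauto.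
Qed.

Lemma par_steps M N : par M N -> steps M N.
Proof.
  induction 1.
  - apply rt_refl.
  - eapply rt_trans.
    + apply (steps_cong (fun x => App x N)); [intros; constructor; auto | eauto].
    + apply (steps_cong (fun x => App M' x)); [intros; constructor; auto | eauto].
  - apply (steps_cong (fun x => Lam t x)); [intros; constructor; auto | eauto].
  - apply (steps_cong (fun x => Quo a x)); [intros; constructor; auto | eauto].
  - apply (steps_cong (fun x => Unq a x)); [intros; constructor; auto | eauto].
  - apply (steps_cong (fun x => TLam x)); [intros; constructor; auto | eauto].
  - apply (steps_cong (fun x => TApp x A)); [intros; constructor; auto | eauto].
  - eapply rt_trans; [eapply rt_trans|].
    + apply (steps_cong (fun x => App x N)); [intros; constructor; auto | eauto].
    + apply (steps_cong (fun x => App (Lam t M1) x)); [intros; constructor; auto | eauto].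
    + apply rt_step; constructor.
  - eapply rt_trans.
    + apply (steps_cong (fun x => TApp x A)); [intros; constructor; auto | eauto].
    + apply rt_step; constructor.
  - eapply rt_trans.
    + apply (steps_cong (fun x => Unq a x)); [intros; constructor; auto | eauto].
    + apply rt_step; constructor.
Qed.

Lemma step_par M N : step M N -> par M N.
Proof.
  induction 1; try (constructor; auto; fail).
  - eapply par_beta; apply par_refl.
  - apply par_uq; apply par_refl.
  - apply par_tbeta; apply par_refl.
  - constructor; auto; apply par_refl.
  - constructor; auto; apply par_refl.
Qed.

Lemma steps_pars M N : steps M N -> pars M N.
Proof.
  induction 1; [apply rt_step, step_par; auto | apply rt_refl | eapply rt_trans; eauto].
Qed.

Lemma pars_steps M N : pars M N -> steps M N.
Proof.
  induction 1; [apply par_steps; auto | apply rt_refl | eapply rt_trans; eauto].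
Qed.

Theorem mainTheorem7 (M N1 N2 : tm) :
  steps M N1 -> steps M N2 ->
  exists N, steps N1 N /\ steps N2 N.
Proof.
  intros H1 H2.
  destruct (pars_confl _ _ (steps_pars _ _ H1) _ (steps_pars _ _ H2)) as [N [A B]].
  exists N; split; apply pars_steps; auto.
Qed.
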